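(* In any execution of $\mathcal{U}$, suppose $S$ stores operation $o$ at time $T$ and stores operation $o'$ at time $T' > T$. If $o \neq o'$ then $o$ is done at time $T'$.
   Context: Model: an asynchronous shared-memory system with possibly infinitely many processes, any of which may crash, communicating via atomic shared objects. A fetch-and-increment (F\&I) object stores an integer; F\&I$(C)$ atomically returns the current value and increments it. A generalized-compare-and-swap (GCAS) object $O$ stores a value and supports Read$(O)$ and GCAS$(c, O, v_1, v_2)$, which atomically does: if $c(\text{current value of } O, v_1)$ holds then set $O := v_2$ and return true, else return false. Tuples are compared componentwise for $=$; GCAS$(>, A, (t,-,-), v)$ succeeds iff the time field of $A$ is strictly greater than $t$. Implemented type $\mathcal{T} = (OP, RES, Q, \delta)$ with initial state $s_0$; a procedure $apply_{\mathcal{T}}(o,s)$ returns some $(s',r)$ with $(s,o,s',r)\in\delta$. $NULL$ is a value different from every response of $\mathcal{T}$, and $NOOP$ is a name different from every operation of $\mathcal{T}$. Algorithm $\mathcal{U}$: each process $p$ owns a GCAS object $H_p$ with fields $(time, response)$. Shared objects: F\&I object $C$, initially $1$; GCAS object $A$ with fields $(time, op, ptr)$, initially $(0, NOOP, h(NOOP))$, where $h(NOOP)$ is a pointer to an immutable location containing $(0,\perp)$; GCAS object $S$ with fields $(time, state, response, ptr)$, initially $(0, s_0, \perp, h(NOOP))$. Process $p$ performs operation $o$ by calling DoOp$(o)$: (1) DoOp$(o)$ invoked; (2) $t := $ F\&I$(C)$; (3) $H_p := (t, NULL)$; (4) while $H_p = (t, NULL)$ do: (5) $(t^*, s^*, r^*,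 roptr^* ) := S$; (6) GCAS$(=, *roptr^*, (t^*, NULL), (t^*, r^* ))$; (7) GCAS$(>, A, (t,-,-), (t, o, \&H_p))$; (8) $(t', o', roptr') := A$; (9) $(\hat t, \hat r) := *roptr'$; (10) if $(\hat t,\hat r) = (t', NULL)$ then (11) $(s', r') := apply_{\mathcal{T}}(o', s^* )$; (12) GCAS$(=, S, (t^*,s^*,r^*,roptr^* ), (t', s', r', roptr'))$; (13) else GCAS$(=, A, (t', o', roptr'), (t, o, \&H_p))$; end while; (14) return $H_p.response$. Notation: an ''operation'' $o$ means one invocation of DoOp$(o)$ (or the initial $NOOP$). $p(o)$ is the process executing it; $t(o)$ is the value returned by its F\&I at line 2, or $\infty$ if line 2 has not been executed; $h(o)$ is $H_{p(o)}$. For $NOOP$: $t(NOOP)=0$ and $h(NOOP)$ is the immutable location containing $(0,\perp)$. Operation $o$ is done at time $T$ if at some time $T'\le T$, $h(o) = (t(o), r)$ with $r \neq NULL$. ''Operation $o$ is stored in $S$'' at a time means $S = (t(o), -, r, h(o))$ for some $r$ at that time (at every time exactly one operation is stored in $S$). *)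

(* Defs.v *)
From Stdlib Require Import Arith.

Set Implicit Arguments.

Section AlgU.

(* OP, RES, Q : operations, responses, states of the implemented type T;
   delta : its transition relation (s, o, s', r) in delta; s0 : initial state;
   Proc : the (possibly infinite) set of processes. *)
Context (OP RES Q Proc : Type) (delta : Q -> OP -> Q -> RES -> Prop) (s0 : Q).

(* pointers: h(NOOP) (immutable location containing (0,bot)) or &H_p *)
Inductive ptr := PNoop | PH (p : Proc).

Inductive opn := NOOP | Op (o : OP).

Inductive rval := RNull | RBot | RVal (r : RES).

Record Shared := mkShared {
  sC : nat;                          (* F&I object C *)
  sA : nat * opn * ptr;              (* A = (time, op, ptr) *)
  sS : nat * Q * rval * ptr;         (* S = (time, state, response, ptr) *)
  sH : Proc -> nat * rval            (* H_p = (time, response) *)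
}.

Definition deref (H : Proc -> nat * rval) (x : ptr) : nat * rval :=
  match x with PNoop => (0, RBot) | PH q => H q end.

(* program counter of a process, together with its local variables.
   Lk ... means "next step executes line k". *)
Inductive pcT :=
| Idle                                           (* no pending operation; next: line 1 *)
| L2 (o : OP)
| L3 (o : OP) (t : nat)
| L4 (o : OP) (t : nat)
| L5 (o : OP) (t : nat)
| L6 (o : OP) (t : nat) (ts : nat) (ss : Q) (rs : rval) (ps : ptr)
| L7 (o : OP) (t : nat) (ts : nat) (ss : Q) (rs : rval) (ps : ptr)
| L8 (o : OP) (t : nat) (ts : nat) (ss : Q) (rs : rval) (ps : ptr)
| L9 (o : OP) (t : nat) (ts : nat) (ss : Q) (rs : rval) (ps : ptr)
     (t' : nat) (o' : opn) (p' : ptr)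
| L10 (o : OP) (t : nat) (ts : nat) (ss : Q) (rs : rval) (ps : ptr)
      (t' : nat) (o' : opn) (p' : ptr) (th : nat) (rh : rval)
| L11 (o : OP) (t : nat) (ts : nat) (ss : Q) (rs : rval) (ps : ptr)
      (t' : nat) (o' : opn) (p' : ptr)
| L12 (o : OP) (t : nat) (ts : nat) (ss : Q) (rs : rval) (ps : ptr)
      (t' : nat) (s' : Q) (r' : RES) (p' : ptr)
| L13 (o : OP) (t : nat) (t' : nat) (o' : opn) (p' : ptr)
| L14 (o : OP) (t : nat).

Definition updH (sh : Shared) (q : Proc) (v : nat * rval) (sh' : Shared) : Prop :=
  sC sh' = sC sh /\ sA sh' = sA sh /\ sS sh' = sS sh /\
  sH sh' q = v /\ (forall q', q' <> q -> sH sh' q' = sH sh q').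

Inductive lstep (p : Proc) : Shared -> pcT -> Shared -> pcT -> Prop :=
(* (1) DoOp(o) invoked *)
| st1 sh o : lstep p sh Idle sh (L2 o)
(* (2) t := F&I(C) *)
| st2 sh o :
    lstep p sh (L2 o) (mkShared (S (sC sh)) (sA sh) (sS sh) (sH sh)) (L3 o (sC sh))
(* (3) H_p := (t, NULL) *)
| st3 sh sh' o t : updH sh p (t, RNull) sh' -> lstep p sh (L3 o t) sh' (L4 o t)
(* (4) while H_p = (t, NULL) *)
| st4_loop sh o t : sH sh p = (t, RNull) -> lstep p sh (L4 o t) sh (L5 o t)
| st4_exit sh o t : sH sh p <> (t, RNull) -> lstep p sh (L4 o t) sh (L14 o t)
(* (5) (t*, s*, r*, roptr* ) := S *)
| st5 sh o t ts ss rs ps :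
    sS sh = (ts, ss, rs, ps) -> lstep p sh (L5 o t) sh (L6 o t ts ss rs ps)
(* (6) GCAS(=, *roptr*, (t*, NULL), (t*, r* )); the location h(NOOP) is immutable *)
| st6_succ sh sh' o t ts ss rs q :
    sH sh q = (ts, RNull) -> updH sh q (ts, rs) sh' ->
    lstep p sh (L6 o t ts ss rs (PH q)) sh' (L7 o t ts ss rs (PH q))
| st6_fail sh o t ts ss rs ps :
    (forall q, ps = PH q -> sH sh q <> (ts, RNull)) ->
    lstep p sh (L6 o t ts ss rs ps) sh (L7 o t ts ss rs ps)
(* (7) GCAS(>, A, (t,-,-), (t, o, &H_p)) *)
| st7_succ sh o t ts ss rs ps :
    t < fst (fst (sA sh)) ->
    lstep p sh (L7 o t ts ss rs ps)
      (mkShared (sC sh) (t, Op o, PH p) (sS sh) (sH sh)) (L8 o t ts ss rs ps)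
| st7_fail sh o t ts ss rs ps :
    fst (fst (sA sh)) <= t ->
    lstep p sh (L7 o t ts ss rs ps) sh (L8 o t ts ss rs ps)
(* (8) (t', o', roptr') := A *)
| st8 sh o t ts ss rs ps t' o' p' :
    sA sh = (t', o', p') ->
    lstep p sh (L8 o t ts ss rs ps) sh (L9 o t ts ss rs ps t' o' p')
(* (9) (^t, ^r) := *roptr' *)
| st9 sh o t ts ss rs ps t' o' p' th rh :
    deref (sH sh) p' = (th, rh) ->
    lstep p sh (L9 o t ts ss rs ps t' o' p') sh (L10 o t ts ss rs ps t' o' p' th rh)
(* (10) if (^t, ^r) = (t', NULL) then ... else ... *)
| st10_then sh o t ts ss rs ps t' o' p' th rh :
    (th, rh) = (t', RNull) ->
    lstep p sh (L10 o t ts ss rs ps t' o' p' th rh) sh (L11 o t ts ss rs ps t' o' p')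
| st10_else sh o t ts ss rs ps t' o' p' th rh :
    (th, rh) <> (t', RNull) ->
    lstep p sh (L10 o t ts ss rs ps t' o' p' th rh) sh (L13 o t t' o' p')
(* (11) (s', r') := apply_T(o', s* ), any (s*, o', s', r') in delta *)
| st11 sh o t ts ss rs ps t' oo p' s' r' :
    delta ss oo s' r' ->
    lstep p sh (L11 o t ts ss rs ps t' (Op oo) p') sh (L12 o t ts ss rs ps t' s' r' p')
(* (12) GCAS(=, S, (t*, s*, r*, roptr* ), (t', s', r', roptr')) *)
| st12_succ sh o t ts ss rs ps t' s' r' p' :
    sS sh = (ts, ss, rs, ps) ->
    lstep p sh (L12 o t ts ss rs ps t' s' r' p')
      (mkShared (sC sh) (sA sh) (t', s', RVal r', p') (sH sh)) (L4 o t)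
| st12_fail sh o t ts ss rs ps t' s' r' p' :
    sS sh <> (ts, ss, rs, ps) ->
    lstep p sh (L12 o t ts ss rs ps t' s' r' p') sh (L4 o t)
(* (13) GCAS(=, A, (t', o', roptr'), (t, o, &H_p)) *)
| st13_succ sh o t t' o' p' :
    sA sh = (t', o', p') ->
    lstep p sh (L13 o t t' o' p') (mkShared (sC sh) (t, Op o, PH p) (sS sh) (sH sh)) (L4 o t)
| st13_fail sh o t t' o' p' :
    sA sh <> (t', o', p') ->
    lstep p sh (L13 o t t' o' p') sh (L4 o t)
(* (14) return H_p.response *)
| st14 sh o t : lstep p sh (L14 o t) sh Idle.

Record Config := mkConfig { csh : Shared; cpc : Proc -> pcT }.

Definition step (c : Config) (p : Proc) (c' : Config) : Prop :=
  lstep p (csh c) (cpc c p) (csh c') (cpc c' p) /\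
  (forall q, q <> p -> cpc c' q = cpc c q).

(* initial configuration (the initial contents of the H_p are left arbitrary) *)
Definition initial (c : Config) : Prop :=
  sC (csh c) = 1 /\ sA (csh c) = (0, NOOP, PNoop) /\
  sS (csh c) = (0, s0, RBot, PNoop) /\ (forall q, cpc c q = Idle).

(* An execution with n steps: configurations cfg 0 .. cfg n ("times"),
   step i (by process who i) leads from cfg i to cfg (i+1).
   Crashed processes simply take no further steps. *)
Definition execution (n : nat) (cfg : nat -> Config) (who : nat -> Proc) : Prop :=
  initial (cfg 0) /\ forall i, i < n -> step (cfg i) (who i) (cfg (S i)).

(* Operations: the initial NOOP, or the invocation of DoOp performed
   (line 1) by process p at step i. *)
Inductive operation := NoopOp | Inv (i : nat) (p : Proc).

Definition is_operation (n : nat) (cfg : nat -> Config) (who : nat -> Proc)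
    (o : operation) : Prop :=
  match o with
  | NoopOp => True
  | Inv i p => i < n /\ who i = p /\ cpc (cfg i) p = Idle
  end.

(* t(o) = t : the value returned by o's F&I at line 2 (t(o) = infinity, i.e.
   no such t, if line 2 has not been executed); t(NOOP) = 0. *)
Definition t_of (n : nat) (cfg : nat -> Config) (who : nat -> Proc)
    (o : operation) (t : nat) : Prop :=
  match o with
  | NoopOp => t = 0
  | Inv i p => exists j, i < j /\ j < n /\ who j = p /\
      (exists oo, cpc (cfg j) p = L2 oo) /\ sC (csh (cfg j)) = t /\
      (forall k, i < k -> k < j -> who k <> p)
  end.

Definition h_of (o : operation) : ptr :=
  match o with NoopOp => PNoop | Inv _ p => PH p end.

Definition stored_at (n : nat) (cfg : nat -> Config) (who : nat -> Proc)
    (o : operation) (T : nat) : Prop :=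
  exists t s r, t_of n cfg who o t /\ sS (csh (cfg T)) = (t, s, r, h_of o).

Definition done_at (n : nat) (cfg : nat -> Config) (who : nat -> Proc)
    (o : operation) (T : nat) : Prop :=
  exists T0 t r, T0 <= T /\ t_of n cfg who o t /\
    deref (sH (csh (cfg T0))) (h_of o) = (t, r) /\ r <> RNull.

End AlgU.

(* Main.v *)
Require Import Defs.
From Stdlib Require Import Arith Lia Classical.

Section Proof.
Context (OP RES Q Proc : Type) (delta : Q -> OP -> Q -> RES -> Prop).
Notation PC := (pcT OP RES Q Proc).
Notation SH := (Shared OP RES Q Proc).

Definition actT (x : PC) : option nat :=
  match x with
  | @L4 _ _ _ _ _ t | @L5 _ _ _ _ _ t | @L6 _ _ _ _ _ t _ _ _ _ | @L7 _ _ _ _ _ t _ _ _ _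
  | @L8 _ _ _ _ _ t _ _ _ _
  | @L9 _ _ _ _ _ t _ _ _ _ _ _ _ | @L10 _ _ _ _ _ t _ _ _ _ _ _ _ _ _
  | @L11 _ _ _ _ _ t _ _ _ _ _ _ _
  | @L12 _ _ _ _ _ t _ _ _ _ _ _ _ _ | @L13 _ _ _ _ _ t _ _ _ => Some t
  | _ => None end.

Lemma core (w : Proc) (sh sh' : SH) x x' q t pcq pcq' :
  lstep delta w sh x sh' x' ->
  (q = w -> pcq = x /\ pcq' = x') -> (q <> w -> pcq' = pcq) ->
  (forall a b c d e f, x = L6 a b c d e f -> e <> (RNull _)) ->
  sH sh q = (t, (RNull _)) -> actT pcq = Some t ->
  (sH sh' q = (t, (RNull _)) /\ actT pcq' = Some t) \/
  (exists r, sH sh' q = (t, r) /\ r <> (RNull _)).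
Proof.
  intros Hl Hw Hnw Hrs Hh Ha.
  destruct (classic (q = w)) as [E|E].
  - destruct (Hw E) as [E1 E2]; subst pcq pcq'; clear Hnw; subst q.
    inversion Hl; subst; simpl in *;
    repeat match goal with H: updH _ _ _ _ |- _ => destruct H as (?&?&?&?&?) end;
    try discriminate; auto.
    + inversion Ha; subst; congruence.
    + match goal with H: forall q', q' <> ?q0 -> _ |- _ => rename H into Hoth; rename q0 into qq end.
      destruct (classic (w = qq)) as [E'|E'].
      * subst. match goal with H: sH sh _ = (_, RNull _) |- _ => rewrite Hh in H; inversion H; subst end.
        right. eexists; split; [eassumption|].
        eapply Hrs; eauto.
      * left. rewrite Hoth; auto.
  - rewrite (Hnw E). clear Hw.
    inversion Hl; subst; simpl in *;
    repeat match goal with H: updH _ _ _ _ |- _ => destruct H as (?&?&?&?&?) end; auto.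
    + match goal with H: forall q', q' <> _ -> _ |- _ => rename H into Hoth end.
      left. rewrite Hoth; auto.
    + match goal with H: forall q', q' <> ?q0 -> _ |- _ => rename H into Hoth; rename q0 into qq end.
      destruct (classic (q = qq)) as [E'|E'].
      * subst. match goal with H: sH sh _ = (_, RNull _) |- _ => rewrite Hh in H; inversion H; subst end.
        right. eexists; split; [eassumption|].
        eapply Hrs; eauto.
      * left. rewrite Hoth; auto.
Qed.

Lemma S_change (w : Proc) (sh sh' : SH) x x' :
  lstep delta w sh x sh' x' ->
  sS sh' = sS sh \/ exists o t ts ss rs ps t' s' r' p',
    x = L12 o t ts ss rs ps t' s' r' p' /\ sS sh = (ts, ss, rs, ps) /\
    sS sh' = (t', s', RVal r', p').
Proof.
  intros Hl; inversion Hl; subst; simpl; auto;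
  try (destruct H as (_&_&H&_); auto); try (destruct H0 as (_&_&H0&_); auto);
  try (destruct H1 as (_&_&H1&_); auto).
  right. do 10 eexists; eauto.
Qed.

Lemma A_change (w : Proc) (sh sh' : SH) x x' :
  lstep delta w sh x sh' x' ->
  sA sh' = sA sh \/ exists o t, actT x = Some t /\ sA sh' = (t, Op o, PH w).
Proof.
  intros Hl; inversion Hl; subst; simpl;
  repeat match goal with H: updH _ _ _ _ |- _ => destruct H as (?&?&?&?&?) end;
  auto; right; eauto.
Qed.

Lemma C_change (w : Proc) (sh sh' : SH) x x' :
  lstep delta w sh x sh' x' ->
  sC sh <= sC sh' /\ (forall o, x = @L2 OP RES Q Proc o -> sC sh' = S (sC sh)).
Proof.
  intros Hl; inversion Hl; subst; simpl;
  repeat match goal with H: updH _ _ _ _ |- _ => destruct H as (?&?&?&?&?) end;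
  split; try (intros; discriminate); auto; try lia.
Qed.

Definition sec (RO RD : nat -> ptr Proc -> Prop) (x : PC) : Prop :=
  match x with
  | @L6 _ _ _ _ _ _ ts _ rs ps => rs <> RNull _ /\ RO ts ps
  | @L7 _ _ _ _ _ _ ts _ _ ps | @L8 _ _ _ _ _ _ ts _ _ ps => RD ts ps
  | @L9 _ _ _ _ _ _ ts _ _ ps t' _ p' | @L10 _ _ _ _ _ _ ts _ _ ps t' _ p' _ _
  | @L11 _ _ _ _ _ _ ts _ _ ps t' _ p' => RD ts ps /\ RO t' p'
  | @L12 _ _ _ _ _ _ ts _ _ ps t' _ _ p' => RD ts ps /\ RO t' p'
  | @L13 _ _ _ _ _ _ t' _ p' => RO t' p'
  | _ => True end.

Lemma sec_step (w : Proc) (sh sh' : SH) x x' (RO0 RO1 RD0 RD1 : nat -> ptr Proc -> Prop) :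
  lstep delta w sh x sh' x' ->
  (forall t p, RO0 t p -> RO1 t p) -> (forall t p, RD0 t p -> RD1 t p) ->
  (match sS sh with (ts, _, rs, ps) => rs <> RNull _ /\ RO0 ts ps end) ->
  (match sA sh with (ta, _, pa) => RO0 ta pa end) ->
  (forall q ts rs, sH sh' q = (ts, rs) -> rs <> RNull _ -> RD1 ts (PH q)) ->
  (forall ts ps, RO0 ts ps -> (forall q, ps = PH q -> sH sh q <> (ts, RNull _)) -> RD1 ts ps) ->
  sec RO0 RD0 x -> sec RO1 RD1 x'.
Proof.
  intros Hl R1 R2 HS HA H6s H6f Hx.
  inversion Hl; subst; simpl in *; auto.
  all: repeat match goal with H: sS _ = _ |- _ => rewrite H in HS end.
  all: repeat match goal with H: sA _ = _ |- _ => rewrite H in HA end.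
  all: try (intuition auto; fail).
  match goal with H: updH _ _ _ _ |- _ => destruct H as (_&_&_&E&_) end.
  eapply H6s; eauto; tauto.
Qed.

Context (s0 : Q) (n : nat) (cfg : nat -> Config OP RES Q Proc) (who : nat -> Proc).
Hypothesis Hex : execution delta s0 n cfg who.

Definition Hs (k : nat) := sH (csh (cfg k)).
Definition pc (k : nat) := cpc (cfg k).
Definition Done k q t := exists k0, k0 <= k /\ exists r, Hs k0 q = (t, r) /\ r <> RNull _.
Definition ok k q t := Done k q t \/ (Hs k q = (t, RNull _) /\ actT (pc k q) = Some t).
Definition refok k t (x : ptr Proc) := match x with PNoop _ => True | PH q => ok k q t end.
Definition refdone k t (x : ptr Proc) := match x with PNoop _ => True | PH q => Done k q t end.
Definition pcinv k q (x : PC) : Prop :=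
  (match actT x with Some t => ok k q t | None => True end) /\ sec (refok k) (refdone k) x.
Definition Sinv k := match sS (csh (cfg k)) with (ts, _, rs, ps) => rs <> RNull _ /\ refok k ts ps end.
Definition Ainv k := match sA (csh (cfg k)) with (ta, _, pa) => refok k ta pa end.
Definition Invar k := Sinv k /\ Ainv k /\ forall q, pcinv k q (pc k q).

Lemma Done_mono k k' q t : k <= k' -> Done k q t -> Done k' q t.
Proof. intros Hk (k0 & H1 & H2). exists k0; split; [lia|auto]. Qed.

Lemma ok_step k : k < n -> Invar k -> forall q t, ok k q t -> ok (S k) q t.
Proof.
  intros Hk (_ & _ & Hpc) q t [Hd | [Hh Ha]].
  - left. eapply Done_mono; [|eauto]; lia.
  - destruct Hex as [_ Hst]. destruct (Hst k Hk) as [Hl Hoth].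
    edestruct (core _ _ _ _ _ q t (pc k q) (pc (S k) q) Hl) as [[H1 H2]|[r [H1 H2]]].
    + intros ->; split; reflexivity.
    + intros E; apply Hoth; auto.
    + intros a b c d e f E. specialize (Hpc (who k)). unfold pc in Hpc.
      rewrite E in Hpc. unfold pcinv in Hpc; simpl in Hpc. destruct Hpc as [_ [Hr _]]; exact Hr.
    + exact Hh.
    + exact Ha.
    + right; split; auto.
    + left. exists (S k); split; auto. exists r; split; auto.
Qed.

Lemma refok_step k : k < n -> Invar k -> forall t x, refok k t x -> refok (S k) t x.
Proof. intros Hk HI t [|q]; simpl; auto. apply ok_step; auto. Qed.
Lemma refdone_step k : forall t x, refdone k t x -> refdone (S k) t x.
Proof. intros t [|q]; simpl; auto. apply Done_mono; lia. Qed.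

Lemma pcinv_mono k q x : k < n -> Invar k -> pcinv k q x -> pcinv (S k) q x.
Proof.
  intros Hk HI [H1 H2]. split.
  - destruct (actT x); auto. apply ok_step; auto.
  - pose proof (refok_step k Hk HI) as R1. pose proof (refdone_step k) as R2.
    destruct x; simpl in *; intuition.
Qed.

Lemma act_change (w : Proc) (sh sh' : SH) x x' t :
  lstep delta w sh x sh' x' -> actT x' = Some t ->
  actT x = Some t \/ (exists o, x = @L3 OP RES Q Proc o t /\ sH sh' w = (t, RNull _)).
Proof.
  intros Hl; inversion Hl; subst; simpl; intros E; try discriminate; auto.
  right. inversion E; subst. eexists; split; eauto.
  match goal with H: updH _ _ _ _ |- _ => destruct H as (?&?&?&?&?) end; auto.
Qed.

Lemma pcinv_self k : k < n -> Invar k -> pcinv (S k) (who k) (pc (S k) (who k)).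
Proof.
  intros Hk HI. pose proof HI as (HS & HA & Hpc).
  destruct Hex as [_ Hst]. destruct (Hst k Hk) as [Hl _].
  pose proof (Hpc (who k)) as Hx. unfold pc in Hx |- *.
  split.
  - destruct (actT (cpc (cfg (S k)) (who k))) as [t|] eqn:Ea; auto.
    destruct (act_change _ _ _ _ _ _ Hl Ea) as [E|[o [E1 E2]]].
    + destruct Hx as [Hx _]. rewrite E in Hx. apply ok_step; auto.
    + right. split; auto.
  - destruct Hx as [_ Hx]. unfold Sinv, Ainv in HS, HA.
    eapply sec_step; [exact Hl | exact (refok_step k Hk HI) | exact (refdone_step k)
                     | exact HS | exact HA | | | exact Hx].
    + intros q ts rs E Hr. simpl. exists (S k). split; auto. exists rs. split; auto.
    + intros ts [|q]; simpl; auto. intros [D|[Hh _]] Hn.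
      * eapply Done_mono; [|eauto]; lia.
      * exfalso. exact (Hn q eq_refl Hh).
Qed.

Lemma Inv_step k : k < n -> Invar k -> Invar (S k).
Proof.
  intros Hk HI. pose proof HI as (HS & HA & Hpc).
  pose proof Hex as [_ Hst]. destruct (Hst k Hk) as [Hl Hoth].
  split; [|split].
  - unfold Sinv in *. destruct (S_change _ _ _ _ _ Hl) as [E|(o&t&ts&ss&rs&ps&t'&s'&r'&p'&E1&E2&E3)].
    + rewrite E. destruct (sS (csh (cfg k))) as [[[a b] c] d].
      destruct HS; split; auto. apply refok_step; auto.
    + rewrite E3. split; [discriminate|].
      pose proof (Hpc (who k)) as Hx. unfold pc in Hx. rewrite E1 in Hx.
      destruct Hx as [_ [_ Hx]]. apply refok_step; auto.
  - unfold Ainv in *. destruct (A_change _ _ _ _ _ Hl) as [E|(o&t&E1&E2)].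
    + rewrite E. destruct (sA (csh (cfg k))) as [[a b] c]. apply refok_step; auto.
    + rewrite E2. simpl. apply ok_step; auto.
      pose proof (Hpc (who k)) as Hx. destruct Hx as [Hx _]. unfold pc in Hx. rewrite E1 in Hx. exact Hx.
  - intros q. destruct (classic (q = who k)) as [E|E].
    + subst. apply pcinv_self; auto.
    + unfold pc. rewrite Hoth; auto. apply pcinv_mono; auto.
Qed.

Lemma Inv_all k : k <= n -> Invar k.
Proof.
  induction k; intros Hk.
  - destruct Hex as [(H1&H2&H3&H4) _].
    split; [|split].
    + unfold Sinv. rewrite H3. simpl. split; [discriminate|auto].
    + unfold Ainv. rewrite H2. simpl. auto.
    + intros q. unfold pc. rewrite H4. split; simpl; auto.
  - apply Inv_step; [lia|]. apply IHk; lia.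
Qed.


Lemma sC_mono a b : a <= b -> b <= n -> sC (csh (cfg a)) <= sC (csh (cfg b)).
Proof.
  intros Hab Hb. induction b.
  - assert (a = 0) by lia. subst; auto.
  - destruct (Nat.eq_dec a (S b)) as [->|Ha]; auto.
    pose proof Hex as [_ Hst]. destruct (Hst b ltac:(lia)) as [Hl _].
    destruct (C_change _ _ _ _ _ Hl) as [H1 _]. specialize (IHb ltac:(lia) ltac:(lia)). lia.
Qed.

Lemma tdist i i' p t t2 : i < i' -> who i' = p -> pc i' p = Idle _ _ _ _ ->
  t_of n cfg who (Inv i p) t -> t_of n cfg who (Inv i' p) t2 -> t < t2.
Proof.
  intros Hii Hw Hid (j&Hij&Hjn&Hwj&(oo&Hoo)&Hct&Hno) (j2&Hij2&Hjn2&_&_&Hct2&_).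
  assert (j <= i').
  { destruct (Nat.le_gt_cases j i') as [|Hlt]; auto. exfalso. apply (Hno i'); auto. }
  assert (j <> i').
  { intros ->. unfold pc in Hid. congruence. }
  pose proof Hex as [_ Hst]. destruct (Hst j Hjn) as [Hl _].
  rewrite Hwj in Hl.
  destruct (C_change _ _ _ _ _ Hl) as [_ H2]. specialize (H2 oo Hoo).
  pose proof (sC_mono (S j) j2 ltac:(lia) ltac:(lia)). lia.
Qed.

Lemma first_change T d : T + d <= n -> sS (csh (cfg T)) <> sS (csh (cfg (T + d))) ->
  exists k, T <= k < T + d /\ sS (csh (cfg k)) = sS (csh (cfg T)) /\
            sS (csh (cfg (S k))) <> sS (csh (cfg k)).
Proof.
  induction d; intros Hn Hne.
  - rewrite Nat.add_0_r in Hne. congruence.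
  - destruct (classic (sS (csh (cfg (T + d))) = sS (csh (cfg T)))) as [E|E].
    + exists (T + d). split; [lia|]. split; auto. rewrite E.
      replace (S (T + d)) with (T + S d) by lia. auto.
    + destruct (IHd ltac:(lia) (fun e => E (eq_sym e))) as [k Hk]. exists k. intuition lia.
Qed.

End Proof.

Theorem mainTheorem7 (OP RES Q Proc : Type) (delta : Q -> OP -> Q -> RES -> Prop)
    (s0 : Q) (n : nat) (cfg : nat -> Config OP RES Q Proc) (who : nat -> Proc) :
  execution delta s0 n cfg who ->
  forall (o o' : operation Proc) (T T' : nat),
    is_operation n cfg who o -> is_operation n cfg who o' ->
    T < T' -> T' <= n ->
    stored_at n cfg who o T -> stored_at n cfg who o' T' ->
    o <> o' ->
    done_at n cfg who o T'.
Proof.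
  intros Hex o o' T T' Ho Ho' HT HT' (t&s&r&Ht&HS) (t2&s2&r2&Ht2&HS2) Hne.
  destruct o as [|i p].
  - exists 0, 0, (RBot _). simpl in *. repeat split; auto; try lia; discriminate.
  - assert (Hd : sS (csh (cfg T)) <> sS (csh (cfg T'))).
    { intros E. rewrite HS, HS2 in E. destruct o' as [|i' p']; simpl in E; [discriminate|].
      assert (p = p') by congruence. assert (t = t2) by congruence. subst p' t2.
      assert (i <> i') by (intros ->; apply Hne; reflexivity).
      destruct Ho as (Hi&Hwi&Hidi). destruct Ho' as (Hi'&Hwi'&Hidi').
      destruct (Nat.lt_total i i') as [Hlt|[Eq|Hlt]]; [| tauto |].
      - pose proof (tdist _ _ _ _ _ _ _ _ _ Hex _ _ _ _ _ Hlt Hwi' Hidi' Ht Ht2). lia.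
      - pose proof (tdist _ _ _ _ _ _ _ _ _ Hex _ _ _ _ _ Hlt Hwi Hidi Ht2 Ht). lia. }
    replace T' with (T + (T' - T)) in Hd by lia.
    destruct (@first_change OP RES Q Proc n cfg T (T' - T) ltac:(lia) Hd) as (k&Hk&E1&E2).
    pose proof Hex as [_ Hst]. destruct (Hst k ltac:(lia)) as [Hl _].
    destruct (S_change _ _ _ _ _ _ _ _ _ _ Hl) as [E|(oo&tt&ts&ss&rs&ps&t'&s'&r'&p'&F1&F2&F3)].
    + congruence.
    + pose proof (Inv_all _ _ _ _ _ _ _ _ _ Hex k ltac:(lia)) as (_&_&Hpc).
      specialize (Hpc (who k)). destruct Hpc as [_ Hx]. unfold pc in Hx. rewrite F1 in Hx.
      simpl in Hx. destruct Hx as [Hx _].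
      rewrite F2, HS in E1. inversion E1; subst.
      destruct Hx as (k0&Hk0&rr&Hrr&Hne').
      exists k0, t, rr. repeat split; auto; lia.
Qed.
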